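(* Let $\mathbb{Y}$ be the open mono-dynamics with motor the monoid $(\mathbf{R}_+,+)$ (single object $\bullet$), clock $\bullet^{\mathbf h}=\mathbf{R}_+$ with $d^{\mathbf h}(t)=t+d$, state set $\mathbf{R}_+\times\mathbf{R}$, scansion $\tau(t,a)=t$ and transitions $d^{\mathbb{Y}}(t,a)=\{t+d\}\times[a-d,a+d]$ for $d\in\mathbf R_+$. Then the map sending a function $y\in Lip^1_+$ to the partial function $\mathfrak a_y:t\mapsto(t,y(t))$ on $D_y$ is a bijection from $Lip^1_+$ onto the set $\mathcal S_{\mathbb Y}$ of external parts of realizations of $\mathbb Y$ (the empty function corresponding to the empty realization). In particular $\mathcal S^*_{\mathbb Y}\simeq Lip^1_+\setminus\{\emptyset\}$.
   Context: For an interval $K\subset\mathbf R$, $Lip^1(K)$ is the set of $1$-Lipschitz real functions on $K$. For $c\in[0,+\infty]$, $Lip^1([0,c|)=Lip^1([0,c])\cup Lip^1([0,c[)$ (for $c=+\infty$ this is $Lip^1([0,+\infty[)$; for $c=0$ it is $Lip^1(\{0\})\cup\{\emptyset\}$), and $Lip^1_+=\bigcup_{c\in[0,+\infty]}Lip^1([0,c|)$. A realization of an open mono-dynamics $(\tau:\alpha\looparrowright\mathbf h)$ with one-object motor is a partial function $\mathfrak a$ from $st(\mathbf h)$ to the states, with domain $D$, such that $\tau(\mathfrak a(t))=t$ for $t\in D$, and for every arrow $d$ and instant $t$: if $d^{\mathbf h}(t)\in D$ then $t\in D$ and $\mathfrak a(d^{\mathbf h}(t))\in d^\alpha(\mathfrak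 a(t))$. The empty realization is the empty partial function. *)

(* Defs.v *)
From Stdlib Require Import Reals.
Open Scope R_scope.

(* Partial functions R -> X are represented as R -> option X;
   the domain is the set of t with a value Some _. *)
Definition pdom {X : Type} (f : R -> option X) (t : R) : Prop := f t <> None.

(* Domain of the form [0,c] (0 <= c < oo), [0,c[ (0 <= c <= oo).
   c = +oo gives [0,+oo[; c = 0 gives {0} or the empty set. *)
Definition dom_0c_bar (D : R -> Prop) : Prop :=
  (exists c, 0 <= c /\ forall t, D t <-> (0 <= t /\ t <= c)) \/
  (exists c, 0 <= c /\ forall t, D t <-> (0 <= t /\ t < c)) \/
  (forall t, D t <-> 0 <= t).

Definition lip1 (y : R -> option R) : Prop :=
  forall s t u v, y s = Some u -> y t = Some v -> Rabs (u - v) <= Rabs (s - t).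

Definition Lip1plus (y : R -> option R) : Prop :=
  dom_0c_bar (pdom y) /\ lip1 y.

Definition Ystate (s : R * R) : Prop := 0 <= fst s.
Definition Ytau (s : R * R) : R := fst s.
Definition Ytrans (d : R) (s s' : R * R) : Prop :=
  fst s' = fst s + d /\ snd s - d <= snd s' /\ snd s' <= snd s + d.

Definition Yrealization (a : R -> option (R * R)) : Prop :=
  (forall t, pdom a t -> 0 <= t) /\
  (forall t s, a t = Some s -> Ystate s /\ Ytau s = t) /\
  (forall d t, 0 <= d -> 0 <= t -> forall s', a (t + d) = Some s' ->
      exists s, a t = Some s /\ Ytrans d s s').

Definition realiz_of (y : R -> option R) : R -> option (R * R) :=
  fun t => match y t with Some v => Some (t, v) | None => None end.

Definition empty_pfun {X : Type} : R -> option X := fun _ => None.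

(* Main.v *)
Require Import Defs.
From Stdlib Require Import Reals.
From Stdlib Require Import Lra Classical FunctionalExtensionality.
Open Scope R_scope.

Lemma dom_class (D : R -> Prop) :
  (forall t, D t -> 0 <= t) -> (forall s t, D t -> 0 <= s <= t -> D s) ->
  dom_0c_bar D.
Proof.
  intros Hpos Hdown.
  destruct (classic (exists x, D x)) as [Hne|Hemp].
  - assert (Hex : forall t, (exists x, D x /\ t < x) -> 0 <= t -> D t).
    { intros t [x [Dx Hx]] Ht. apply (Hdown t x Dx). lra. }
    destruct (classic (bound D)) as [Hb|Hnb].
    + destruct (completeness D Hb Hne) as [c [Hub Hlub]].
      destruct Hne as [x0 Hx0].
      assert (Hc : 0 <= c) by (pose proof (Hub x0 Hx0); pose proof (Hpos x0 Hx0); lra).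
      assert (Hlt : forall t, t < c -> exists x, D x /\ t < x).
      { intros t Ht. apply NNPP. intro Hn.
        assert (is_upper_bound D t).
        { intros x Dx. destruct (Rle_dec x t); auto.
          exfalso; apply Hn; exists x; split; auto; lra. }
        pose proof (Hlub t H). lra. }
      destruct (classic (D c)) as [Dc|nDc].
      * left. exists c. split; auto. intro t; split.
        -- intro Dt. split; [apply Hpos; auto| apply Hub; auto].
        -- intros Ht. apply (Hdown t c Dc). lra.
      * right; left. exists c. split; auto. intro t; split.
        -- intro Dt. split; [apply Hpos; auto|].
           pose proof (Hub t Dt). destruct (Req_dec t c); [subst; contradiction|lra].
        -- intros [H1 H2]. apply Hex; auto.
    + right; right. intro t; split; [apply Hpos|].
      intro Ht. apply Hex; auto. apply NNPP. intro Hn. apply Hnb.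
      exists t. intros x Dx. destruct (Rle_dec x t); auto.
      exfalso; apply Hn; exists x; split; auto; lra.
  - right; left. exists 0. split; [lra|]. intro t; split.
    + intro Dt. exfalso; apply Hemp; eauto.
    + intros; lra.
Qed.

Lemma dom_props (D : R -> Prop) : dom_0c_bar D ->
  (forall t, D t -> 0 <= t) /\ (forall s t, D t -> 0 <= s <= t -> D s).
Proof.
  intros [[c [_ H]]|[[c [_ H]]|H]]; split; intros *;
    repeat rewrite H; intros; lra.
Qed.

Theorem mainTheorem6 :
  (forall y, Lip1plus y -> Yrealization (realiz_of y)) /\
  (forall y1 y2, Lip1plus y1 -> Lip1plus y2 ->
     realiz_of y1 = realiz_of y2 -> y1 = y2) /\
  (forall a, Yrealization a -> exists y, Lip1plus y /\ a = realiz_of y) /\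
  (forall y, Lip1plus y -> (realiz_of y = empty_pfun <-> y = empty_pfun)).
Proof.
  split; [|split; [|split]].
  - intros y [Hd Hl]. destruct (dom_props _ Hd) as [Hpos Hdown].
    unfold Yrealization, realiz_of, pdom in *. split; [|split].
    + intros t Ht. apply Hpos. intro E; apply Ht; rewrite E; auto.
    + intros t s. destruct (y t) eqn:E; [|discriminate]. intro Hs; injection Hs; intros <-.
      unfold Ystate, Ytau; simpl; split; auto. apply Hpos. rewrite E; discriminate.
    + intros d t Hd0 Ht s'. destruct (y (t + d)) as [v|] eqn:E; [|discriminate].
      intro Hs; injection Hs; intros <-.
      assert (Dt : y t <> None).
      { apply (Hdown t (t + d)). rewrite E; discriminate. lra. }
      destruct (y t) as [u|] eqn:Eu; [|contradiction].
      exists (t, u). split; auto. unfold Ytrans; simpl.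
      pose proof (Hl _ _ _ _ E Eu) as HL.
      replace (t + d - t) with d in HL by ring. rewrite (Rabs_right d) in HL by lra.
      split; [ring|]. unfold Rabs in HL. destruct (Rcase_abs (v - u)); lra.
  - intros y1 y2 _ _ H. extensionality t.
    pose proof (f_equal (fun f => f t) H) as Ht. unfold realiz_of in Ht; simpl in Ht.
    destruct (y1 t), (y2 t); congruence.
  - intros a [Hpos [Hst Htr]].
    exists (fun t => match a t with Some s => Some (snd s) | None => None end).
    split; [split|].
    + apply dom_class.
      * intros t Ht. apply Hpos. unfold pdom in *. intro E; apply Ht; rewrite E; auto.
      * intros s t Dt Hs. unfold pdom in *.
        destruct (a t) as [p|] eqn:E; [|contradiction].
        destruct (Htr (t - s) s ltac:(lra) ltac:(lra) p) as [q [Eq _]].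
        { replace (s + (t - s)) with t by ring. auto. }
        rewrite Eq; discriminate.
    + intros s t u v Hs Ht.
      destruct (a s) as [p|] eqn:Es; [|discriminate].
      destruct (a t) as [q|] eqn:Et; [|discriminate].
      injection Hs; injection Ht; intros <- <-.
      destruct (Hst _ _ Es) as [Sp Tp]. destruct (Hst _ _ Et) as [Sq Tq].
      unfold Ystate, Ytau in *.
      assert (forall s t p q, s <= t -> a s = Some p -> a t = Some q -> fst p = s -> fst q = t ->
                Rabs (snd p - snd q) <= Rabs (s - t)).
      { intros s0 t0 p0 q0 Hle E0 E1 F0 F1.
        destruct (Htr (t0 - s0) s0 ltac:(lra) ltac:(destruct (Hst _ _ E0) as [S0 _]; unfold Ystate in S0; lra) q0) as [r [Er Tr]].
        { replace (s0 + (t0 - s0)) with t0 by ring. auto. }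
        rewrite E0 in Er; injection Er; intros <-. unfold Ytrans in Tr.
        rewrite (Rabs_left1 (s0 - t0)) by lra.
        unfold Rabs; destruct (Rcase_abs (snd p0 - snd q0)); lra. }
      destruct (Rle_dec s t).
      * apply H; auto.
      * rewrite Rabs_minus_sym, (Rabs_minus_sym s). apply H; auto; lra.
    + extensionality t. unfold realiz_of. destruct (a t) as [p|] eqn:E; auto.
      destruct (Hst _ _ E) as [_ Tp]. unfold Ytau in Tp. destruct p; simpl in *; subst; auto.
  - intros y _. unfold realiz_of, empty_pfun. split; intro H.
    + extensionality t. pose proof (f_equal (fun f => f t) H) as Ht; simpl in Ht.
      destruct (y t); congruence.
    + rewrite H. auto.
Qed.
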